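(* Fix an integer $K\ge0$, $\kappa\ge2$ and $a\in\,]0,\infty[$. Consider the regime $\ell\to\infty$, $q\to0$, $\ell q\to a$. For all $\ell$ large enough and $q$ small enough (with $\ell q$ close enough to $a$), the matrix $(M^{K+1}_H(b,c))_{0\le b,c\le\ell}$ is stochastic (nonnegative entries, rows summing to $1$), and $$\forall b,c\in\{0,\dots,\ell\}\qquad \sum_{h=0}^c M_H(b,h)\le\sum_{h=0}^c M^{K+1}_H(b,h).$$ Equivalently, the quantile maps satisfy $\mathcal M'_H(b,u)\ge\mathcal M^{K+1}_H(b,u)$ for all $b\in\{0,\dots,\ell\}$, $u\in[0,1]$.
   Context: Let $q\in\,]0,1-1/\kappa[$ and $p=\kappa q/(\kappa-1)$. The lumped mutation matrix on Hamming classes $\{0,\dots,\ell\}$ is $$M_H(b,c)=\sum_{\substack{0\le k\le\ell-b,\ 0\le l\le b\\ k-l=c-b}}\binom{\ell-b}{k}\binom{b}{l}\Big(p\big(1-\tfrac1\kappa\big)\Big)^k\Big(1-p\big(1-\tfrac1\kappa\big)\Big)^{\ell-b-k}\Big(\frac p\kappa\Big)^l\Big(1-\frac p\kappa\Big)^{b-l}.$$ Assume $K+2\le\ell$. The modified matrix $M^{K+1}_H$ is defined as follows. For $b\in\{0,\dots,K+1\}$: $M^{K+1}_H(b,c)=M_H(c+1,c)$ if $0\le c<b$; $M^{K+1}_H(b,c)=M_H(b,c)$ if $b\le c\le K$; $M^{K+1}_H(b,c)=0$ if $K+2\le c\le\ell$; and $M^{K+1}_H(b,K+1)=1-\sum_{h=0}^{b-1}M_H(h+1,h)-\sum_{h=b}^KM_H(b,h)$.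 For $b\in\{K+2,\dots,\ell\}$: $M^{K+1}_H(b,c)=M_H(b,c)$ for all $c$. For $b\in\{0,\dots,\ell\}$, $u\in[0,1]$, $\mathcal M'_H(b,u)$ is the unique $c$ with $\sum_{h<c}M_H(b,h)<u\le\sum_{h\le c}M_H(b,h)$, and $\mathcal M^{K+1}_H(b,u)$ is defined in the same way with $M^{K+1}_H$ in place of $M_H$. *)

(* Defs.v *)
From Stdlib Require Import Reals Lra Lia Arith.
Open Scope R_scope.

Fixpoint sumR (f : nat -> R) (n : nat) : R :=
  match n with
  | O => 0
  | S m => sumR f m + f m
  end.

Definition pp (kappa : nat) (q : R) : R := INR kappa * q / (INR kappa - 1).

(* Lumped mutation matrix M_H(b,c) on Hamming classes {0..l}. *)
Definition MH (l kappa : nat) (q : R) (b c : nat) : R :=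
  let p := pp kappa q in
  let k' := INR kappa in
  sumR (fun k =>
    sumR (fun j =>
      if Nat.eqb (k + b) (c + j) then
        Binomial.C (l - b) k * Binomial.C b j
        * (p * (1 - 1 / k')) ^ k * (1 - p * (1 - 1 / k')) ^ (l - b - k)
        * (p / k') ^ j * (1 - p / k') ^ (b - j)
      else 0) (S b)) (S (l - b)).

Definition MHK (K l kappa : nat) (q : R) (b c : nat) : R :=
  if Nat.leb b (K + 1) then
    if Nat.ltb c b then MH l kappa q (c + 1) c
    else if Nat.leb c K then MH l kappa q b c
    else if Nat.eqb c (K + 1) then
      1 - sumR (fun h => MH l kappa q (h + 1) h) b
        - sumR (fun i => MH l kappa q b (b + i)) (K + 1 - b)
    else 0
  else MH l kappa q b c.

(* Main.v *)
Require Import Defs.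
From Stdlib Require Import Reals Lra Lia Arith FunctionalExtensionality.
Open Scope R_scope.

Lemma sumR_ext f g n : (forall i, (i < n)%nat -> f i = g i) -> sumR f n = sumR g n.
Proof. induction n; simpl; intros H; [reflexivity|].
  rewrite IHn by (intros; apply H; lia). rewrite H by lia. reflexivity. Qed.

Lemma sumR_le f g n : (forall i, (i < n)%nat -> f i <= g i) -> sumR f n <= sumR g n.
Proof. induction n; simpl; intros H; [lra|].
  assert (sumR f n <= sumR g n) by (apply IHn; intros; apply H; lia).
  assert (f n <= g n) by (apply H; lia). lra. Qed.

Lemma sumR_nonneg f n : (forall i, (i < n)%nat -> 0 <= f i) -> 0 <= sumR f n.
Proof. induction n; simpl; intros H; [lra|].
  assert (0 <= sumR f n) by (apply IHn; intros; apply H; lia).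
  assert (0 <= f n) by (apply H; lia). lra. Qed.

Lemma sumR_plus f g n : sumR (fun i => f i + g i) n = sumR f n + sumR g n.
Proof. induction n; simpl; [ring| rewrite IHn; ring]. Qed.

Lemma sumR_scal c f n : sumR (fun i => c * f i) n = c * sumR f n.
Proof. induction n; simpl; [ring| rewrite IHn; ring]. Qed.

Lemma sumR_zero n : sumR (fun _ => 0) n = 0.
Proof. induction n; simpl; [ring| rewrite IHn; ring]. Qed.

Lemma sumR_le_const f c n : (forall i, (i < n)%nat -> f i <= c) -> sumR f n <= INR n * c.
Proof. induction n; simpl sumR; intros H; [simpl; lra|].
  assert (sumR f n <= INR n * c) by (apply IHn; intros; apply H; lia).
  assert (f n <= c) by (apply H; lia). rewrite S_INR. lra. Qed.

Lemma sumR_split f n m : sumR f (n + m) = sumR f n + sumR (fun i => f (n + i)%nat) m.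
Proof. induction m; simpl.
  - rewrite Nat.add_0_r; ring.
  - rewrite Nat.add_succ_r; simpl; rewrite IHm; ring. Qed.

Lemma sumR_swap (F : nat -> nat -> R) n m :
  sumR (fun i => sumR (fun j => F i j) m) n = sumR (fun j => sumR (fun i => F i j) n) m.
Proof. induction n; simpl.
  - rewrite sumR_zero; reflexivity.
  - rewrite IHn, <- sumR_plus. reflexivity. Qed.

Lemma sumR_ge_term f n i0 : (forall i, (i < n)%nat -> 0 <= f i) -> (i0 < n)%nat -> f i0 <= sumR f n.
Proof. induction n; intros H Hi; [lia|]. simpl.
  destruct (Nat.eq_dec i0 n).
  - subst. assert (0 <= sumR f n) by (apply sumR_nonneg; intros; apply H; lia). lra.
  - assert (f i0 <= sumR f n) by (apply IHn; [intros; apply H; lia| lia]).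
    assert (0 <= f n) by (apply H; lia). lra. Qed.

Lemma sumR_strict f g n i0 d : (forall i, (i < n)%nat -> f i <= g i) -> (i0 < n)%nat ->
  f i0 + d <= g i0 -> sumR f n + d <= sumR g n.
Proof. induction n; intros H Hi Hd; [lia|]. simpl.
  destruct (Nat.eq_dec i0 n).
  - subst. assert (sumR f n <= sumR g n) by (apply sumR_le; intros; apply H; lia). lra.
  - assert (sumR f n + d <= sumR g n) by (apply IHn; [intros; apply H; lia| lia| auto]).
    assert (f n <= g n) by (apply H; lia). lra. Qed.

Lemma sumR_f_R0 f n : sumR f (S n) = sum_f_R0 f n.
Proof. induction n; [simpl; ring|].
  replace (sumR f (S (S n))) with (sumR f (S n) + f (S n)) by reflexivity.
  rewrite IHn; reflexivity. Qed.

Lemma C_pos n k : 0 <= Binomial.C n k.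
Proof. unfold Binomial.C. apply Rmult_le_pos; [apply pos_INR|].
  left; apply Rinv_0_lt_compat; apply Rmult_lt_0_compat; apply lt_0_INR; apply lt_O_fact. Qed.

Lemma C_sum n x : sumR (fun k => Binomial.C n k * x ^ k * (1 - x) ^ (n - k)) (S n) = 1.
Proof. rewrite sumR_f_R0, <- Binomial.binomial. replace (x + (1 - x)) with 1 by ring. apply pow1. Qed.

Lemma C_sum2 n : sumR (fun k => Binomial.C n k) (S n) = 2 ^ n.
Proof. replace 2 with (1 + 1) by ring. rewrite Binomial.binomial, <- sumR_f_R0.
  apply sumR_ext; intros. rewrite !pow1; ring. Qed.

Lemma C_n0 n : Binomial.C n 0 = 1.
Proof. unfold Binomial.C. rewrite Nat.sub_0_r. simpl. field. apply INR_fact_neq_0. Qed.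

Lemma C_1 r : Binomial.C (S r) 1 = INR (S r).
Proof. unfold Binomial.C. replace (S r - 1)%nat with r by lia.
  rewrite fact_simpl, mult_INR. simpl (fact 1). change (INR 1) with 1. field. apply INR_fact_neq_0. Qed.

Lemma fact_ge r m : (fact r * r ^ m <= fact (r + m))%nat.
Proof. induction m.
  - rewrite Nat.add_0_r; simpl; lia.
  - rewrite Nat.add_succ_r, fact_simpl, Nat.pow_succ_r'. nia. Qed.

Lemma C_lower r m : INR r ^ m / INR (fact m) <= Binomial.C (r + m) m.
Proof. unfold Binomial.C. replace (r + m - m)%nat with r by lia.
  assert (H := fact_ge r m). apply le_INR in H. rewrite mult_INR, pow_INR in H.
  assert (0 < INR (fact m)) by (apply lt_0_INR, lt_O_fact).
  assert (0 < INR (fact r)) by (apply lt_0_INR, lt_O_fact).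
  unfold Rdiv. rewrite Rinv_mult.
  apply Rmult_le_reg_r with (INR (fact m) * INR (fact r)). nra.
  replace (INR r ^ m * / INR (fact m) * (INR (fact m) * INR (fact r))) with (INR (fact r) * INR r ^ m) by (field; lra).
  replace (INR (fact (r + m)) * (/ INR (fact m) * / INR (fact r)) * (INR (fact m) * INR (fact r))) with (INR (fact (r+m))) by (field; lra).
  lra. Qed.

Lemma pow_le1 z n : 0 <= z <= 1 -> z ^ n <= 1.
Proof. intros. rewrite <- (pow1 n). apply pow_incr. lra. Qed.

Lemma pow_decr z n m : 0 <= z <= 1 -> (n <= m)%nat -> z ^ m <= z ^ n.
Proof. intros. replace m with (n + (m - n))%nat by lia. rewrite pow_add.
  assert (0 <= z ^ n) by (apply pow_le; lra).
  assert (z ^ (m - n) <= 1) by (apply pow_le1; auto).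
  assert (0 <= z ^ (m - n)) by (apply pow_le; lra). nra. Qed.

Lemma exp_pow t n : exp t ^ n = exp (INR n * t).
Proof. induction n; simpl pow. simpl INR. rewrite Rmult_0_l, exp_0; ring.
  rewrite IHn, S_INR, <- exp_plus. f_equal. ring. Qed.

Definition Aw n x k := Binomial.C n k * x ^ k * (1 - x) ^ (n - k).
Definition MM l X Y b c := sumR (fun k => sumR (fun j =>
  if Nat.eqb (k + b) (c + j) then Aw (l - b) X k * Aw b Y j else 0) (S b)) (S (l - b)).
Definition XX kappa q := pp kappa q * (1 - 1 / INR kappa).
Definition YY kappa q := pp kappa q / INR kappa.

Lemma MH_MM l kappa q : MH l kappa q = MM l (XX kappa q) (YY kappa q).
Proof. apply functional_extensionality; intro b. apply functional_extensionality; intro c.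
  unfold MH, MM, XX, YY. apply sumR_ext; intros k _. apply sumR_ext; intros j _.
  destruct (Nat.eqb _ _); [unfold Aw; ring| reflexivity]. Qed.

Lemma Aw_nonneg n x k : 0 <= x <= 1 -> 0 <= Aw n x k.
Proof. intros. unfold Aw. apply Rmult_le_pos; [apply Rmult_le_pos|];
  [apply C_pos| apply pow_le; lra| apply pow_le; lra]. Qed.

Lemma Aw_sum n x : sumR (fun k => Aw n x k) (S n) = 1.
Proof. apply C_sum. Qed.

Lemma Aw_split n x m y k : Aw n x k = sumR (fun j => Aw n x k * Aw m y j) (S m).
Proof. rewrite sumR_scal, Aw_sum. ring. Qed.

Lemma ite_sum t j v n : (j <= t)%nat ->
  sumR (fun h => if Nat.eqb t (h + j) then v else 0) n = if Nat.ltb t (n + j) then v else 0.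
Proof. intros Hj. induction n.
  - simpl. destruct (Nat.ltb_spec t j); [lia| reflexivity].
  - simpl sumR. rewrite IHn.
    destruct (Nat.ltb_spec t (n + j)), (Nat.eqb_spec t (n + j)), (Nat.ltb_spec t (S n + j)); try lia; ring. Qed.

Section S.
Variables (l : nat) (X Y : R).
Hypothesis HX : 0 <= X <= 1.
Hypothesis HY : 0 <= Y <= 1.

Lemma MM_nonneg b c : 0 <= MM l X Y b c.
Proof. unfold MM. apply sumR_nonneg; intros k _. apply sumR_nonneg; intros j _.
  destruct (Nat.eqb _ _); [apply Rmult_le_pos; apply Aw_nonneg; auto| lra]. Qed.

Lemma cumul_eq b c : sumR (fun h => MM l X Y b h) (S c) =
  sumR (fun k => sumR (fun j => if Nat.leb (k + b) (c + j) then Aw (l - b) X k * Aw b Y j else 0) (S b)) (S (l - b)).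
Proof. unfold MM. rewrite sumR_swap. apply sumR_ext; intros k Hk.
  rewrite sumR_swap. apply sumR_ext; intros j Hj.
  rewrite ite_sum by lia. destruct (Nat.ltb_spec (k + b) (S c + j)), (Nat.leb_spec (k + b) (c + j)); try lia; reflexivity. Qed.

Lemma sum_ite_le b c : sumR (fun k => sumR (fun j => if Nat.leb (k + b) (c + j) then Aw (l - b) X k * Aw b Y j else 0) (S b)) (S (l - b)) <= 1.
Proof. rewrite <- (Aw_sum (l - b) X). apply sumR_le; intros k _.
  apply Rle_trans with (sumR (fun j => Aw (l - b) X k * Aw b Y j) (S b)); [| right; symmetry; apply Aw_split].
  apply sumR_le; intros j _. destruct (Nat.leb _ _).
  - lra.
  - apply Rmult_le_pos; apply Aw_nonneg; auto. Qed.

Lemma cumul_le1 b c : sumR (fun h => MM l X Y b h) (S c) <= 1.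
Proof. rewrite cumul_eq. apply sum_ite_le. Qed.

Lemma row_sum b : (b <= l)%nat -> sumR (fun h => MM l X Y b h) (S l) = 1.
Proof. intros Hb. rewrite cumul_eq. rewrite <- (Aw_sum (l - b) X). apply sumR_ext; intros k Hk.
  etransitivity; [| symmetry; apply (Aw_split (l - b) X b Y k)].
  apply sumR_ext; intros j Hj. destruct (Nat.leb_spec (k + b) (l + j)); [reflexivity| lia]. Qed.

Lemma cumul_tail b c : (c < b)%nat -> sumR (fun h => MM l X Y b h) (S c) <= 2 ^ b * Y ^ (b - c).
Proof. intros Hcb. rewrite cumul_eq.
  apply Rle_trans with (sumR (fun k => Aw (l - b) X k *
     sumR (fun j => if Nat.leb b (c + j) then Aw b Y j else 0) (S b)) (S (l - b))).
  - apply sumR_le; intros k _. rewrite <- sumR_scal. apply sumR_le; intros j _.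
    destruct (Nat.leb_spec (k + b) (c + j)), (Nat.leb_spec b (c + j)); try lia;
      try lra; try (rewrite Rmult_0_r; lra); apply Rmult_le_pos; apply Aw_nonneg; auto.
  - set (S0 := sumR _ (S b)).
    replace (sumR (fun k => Aw (l - b) X k * S0) (S (l - b))) with S0.
    2:{ rewrite <- (Rmult_1_l S0) at 1. rewrite <- (Aw_sum (l - b) X).
        rewrite Rmult_comm, <- sumR_scal. apply sumR_ext; intros. unfold Aw; ring. }
    unfold S0. rewrite <- C_sum2, Rmult_comm, <- sumR_scal. apply sumR_le; intros j _.
    destruct (Nat.leb_spec b (c + j)).
    + unfold Aw. assert (Y ^ j <= Y ^ (b - c)) by (apply pow_decr; auto; lia).
      assert ((1 - Y) ^ (b - j) <= 1) by (apply pow_le1; lra).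
      assert (0 <= (1 - Y) ^ (b - j)) by (apply pow_le; lra).
      assert (0 <= Y ^ j) by (apply pow_le; lra).
      assert (0 <= Binomial.C b j) by apply C_pos.
      assert (Binomial.C b j * Y ^ j * (1 - Y) ^ (b - j) <= Binomial.C b j * Y ^ j) by
        (rewrite <- (Rmult_1_r (Binomial.C b j * Y ^ j)) at 2; apply Rmult_le_compat_l; nra).
      nra.
    + assert (0 <= Binomial.C b j) by apply C_pos.
      assert (0 <= Y ^ (b - c)) by (apply pow_le; lra). nra. Qed.

Hypothesis HYX : Y <= X.

Lemma M_low c : (c + 1 <= l)%nat -> Y * (1 - X) ^ l <= MM l X Y (c + 1) c.
Proof. intros Hc. unfold MM.
  eapply Rle_trans; [| apply sumR_ge_term with (i0 := 0%nat)].
  2:{ intros; apply sumR_nonneg; intros; destruct (Nat.eqb _ _); [apply Rmult_le_pos; apply Aw_nonneg; auto| lra]. }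
  2: lia.
  eapply Rle_trans; [| apply sumR_ge_term with (i0 := 1%nat)].
  2:{ intros; destruct (Nat.eqb _ _); [apply Rmult_le_pos; apply Aw_nonneg; auto| lra]. }
  2: lia.
  destruct (Nat.eqb_spec (0 + (c + 1)) (c + 1)); [| lia].
  unfold Aw. rewrite C_n0. replace (c + 1)%nat with (S c) by lia. rewrite C_1.
  replace (S c - 1)%nat with c by lia. rewrite pow_O, pow_1, Nat.sub_0_r.
  assert ((1 - X) ^ (l - S c) * (1 - X) ^ c <= (1 - X) ^ (l - S c) * (1 - Y) ^ c).
  { apply Rmult_le_compat_l; [apply pow_le; lra| apply pow_incr; lra]. }
  rewrite <- pow_add in H.
  assert ((1 - X) ^ l <= (1 - X) ^ (l - S c + c)) by (apply pow_decr; [lra| lia]).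
  assert (1 <= INR (S c)) by (rewrite S_INR; assert (0 <= INR c) by apply pos_INR; lra).
  assert (0 <= (1 - X) ^ l) by (apply pow_le; lra).
  assert (0 <= (1 - X) ^ (l - S c) * (1 - Y) ^ c) by (apply Rmult_le_pos; apply pow_le; lra).
  replace (1 * 1 * (1 - X) ^ (l - S c) * (INR (S c) * Y * (1 - Y) ^ c))
    with (INR (S c) * (Y * ((1 - X) ^ (l - S c) * (1 - Y) ^ c))) by ring.
  assert (Y * (1 - X) ^ l <= Y * ((1 - X) ^ (l - S c) * (1 - Y) ^ c)) by (apply Rmult_le_compat_l; lra).
  assert (0 <= Y * ((1 - X) ^ (l - S c) * (1 - Y) ^ c)) by (apply Rmult_le_pos; lra).
  nra. Qed.

Lemma tail_low b K : (b <= K + 1)%nat -> (K + 1 <= l)%nat ->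
  sumR (fun h => MM l X Y b h) (S K) + Aw (l - b) X (K + 1 - b) * Aw b Y 0 <= 1.
Proof. intros Hb HK. rewrite cumul_eq. rewrite <- (Aw_sum (l - b) X).
  apply sumR_strict with (i0 := (K + 1 - b)%nat); [| lia|].
  - intros k _. apply Rle_trans with (sumR (fun j => Aw (l - b) X k * Aw b Y j) (S b)); [| right; symmetry; apply Aw_split].
    apply sumR_le; intros j _. destruct (Nat.leb _ _).
    + lra.
    + apply Rmult_le_pos; apply Aw_nonneg; auto.
  - apply Rle_trans with (sumR (fun j => Aw (l - b) X (K + 1 - b) * Aw b Y j) (S b)); [| right; symmetry; apply Aw_split].
    apply sumR_strict with (i0 := 0%nat); [| lia|].
    + intros j _. destruct (Nat.leb _ _).
      * lra.
      * apply Rmult_le_pos; apply Aw_nonneg; auto.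
    + destruct (Nat.leb_spec (K + 1 - b + b) (K + 0)); [lia|]. lra. Qed.

End S.

Definition MK (M : nat -> nat -> R) (K b c : nat) : R :=
  if Nat.leb b (K + 1) then
    if Nat.ltb c b then M (c + 1)%nat c
    else if Nat.leb c K then M b c
    else if Nat.eqb c (K + 1) then
      1 - sumR (fun h => M (h + 1)%nat h) b
        - sumR (fun i => M b (b + i)%nat) (K + 1 - b)
    else 0
  else M b c.

Lemma MHK_MK K l kappa q b c : MHK K l kappa q b c = MK (MH l kappa q) K b c.
Proof. reflexivity. Qed.

Section C.
Variables (M : nat -> nat -> R) (K l : nat).
Hypothesis Hl : (K + 2 <= l)%nat.
Hypothesis P0 : forall b c, 0 <= M b c.
Hypothesis P1 : forall b, (b <= l)%nat -> sumR (fun c => M b c) (S l) = 1.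
Hypothesis P2 : forall b, (b <= K + 1)%nat ->
  sumR (fun h => M (h + 1)%nat h) b + sumR (fun i => M b (b + i)%nat) (K + 1 - b) <= 1.
Hypothesis P3 : forall b c, (c + 2 <= b)%nat -> (b <= K + 1)%nat ->
  sumR (fun h => M b h) (S c) <= sumR (fun h => M (h + 1)%nat h) (S c).

Lemma MK_lt b h : (b <= K + 1)%nat -> (h < b)%nat -> MK M K b h = M (h + 1)%nat h.
Proof. intros. unfold MK. destruct (Nat.leb_spec b (K + 1)); [|lia].
  destruct (Nat.ltb_spec h b); [reflexivity| lia]. Qed.

Lemma MK_mid b h : (b <= K + 1)%nat -> (b <= h)%nat -> (h <= K)%nat -> MK M K b h = M b h.
Proof. intros. unfold MK. destruct (Nat.leb_spec b (K + 1)); [|lia].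
  destruct (Nat.ltb_spec h b); [lia|]. destruct (Nat.leb_spec h K); [reflexivity| lia]. Qed.

Lemma MK_top b : (b <= K + 1)%nat -> MK M K b (K + 1) =
  1 - sumR (fun h => M (h + 1)%nat h) b - sumR (fun i => M b (b + i)%nat) (K + 1 - b).
Proof. intros. unfold MK. destruct (Nat.leb_spec b (K + 1)); [|lia].
  destruct (Nat.ltb_spec (K + 1) b); [lia|]. destruct (Nat.leb_spec (K + 1) K); [lia|].
  destruct (Nat.eqb_spec (K + 1) (K + 1)); [reflexivity| lia]. Qed.

Lemma MK_big b h : (b <= K + 1)%nat -> (K + 2 <= h)%nat -> MK M K b h = 0.
Proof. intros. unfold MK. destruct (Nat.leb_spec b (K + 1)); [|lia].
  destruct (Nat.ltb_spec h b); [lia|]. destruct (Nat.leb_spec h K); [lia|].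
  destruct (Nat.eqb_spec h (K + 1)); [lia| reflexivity]. Qed.

Lemma MK_out b h : (K + 1 < b)%nat -> MK M K b h = M b h.
Proof. intros. unfold MK. destruct (Nat.leb_spec b (K + 1)); [lia| reflexivity]. Qed.

Lemma Q b : (b <= K + 1)%nat -> sumR (fun h => M b h) b <= sumR (fun h => M (h + 1)%nat h) b.
Proof. intros Hb. destruct b as [|b']; [simpl; lra|].
  simpl sumR. replace (b' + 1)%nat with (S b') by lia.
  destruct b' as [|b'']; [simpl; lra|].
  assert (H := P3 (S (S b'')) b'' ltac:(lia) Hb).
  replace (b'' + 1)%nat with (S b'') in * by lia. lra. Qed.

Lemma sum_first b : (b <= K + 1)%nat -> sumR (fun h => MK M K b h) (K + 2) = 1.
Proof. intros Hb. replace (K + 2)%nat with (b + S (K + 1 - b))%nat by lia.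
  rewrite sumR_split. simpl (sumR _ (S _)).
  rewrite (sumR_ext (fun h => MK M K b h) (fun h => M (h + 1)%nat h)) by (intros; apply MK_lt; lia).
  rewrite (sumR_ext (fun i => MK M K b (b + i)) (fun i => M b (b + i)%nat)) by (intros; apply MK_mid; lia).
  replace (b + (K + 1 - b))%nat with (K + 1)%nat by lia. rewrite MK_top by auto. ring. Qed.

Lemma sum_upto b c : (b <= K + 1)%nat -> (K + 1 <= c)%nat -> sumR (fun h => MK M K b h) (S c) = 1.
Proof. intros Hb Hc. replace (S c) with (K + 2 + (c - K - 1))%nat by lia.
  rewrite sumR_split, sum_first by auto.
  rewrite (sumR_ext _ (fun _ => 0)) by (intros; apply MK_big; lia). rewrite sumR_zero. ring. Qed.

Lemma comb :
    (forall b c : nat, (b <= l)%nat -> (c <= l)%nat -> 0 <= MK M K b c) /\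
    (forall b : nat, (b <= l)%nat -> sumR (fun c => MK M K b c) (S l) = 1) /\
    (forall b c : nat, (b <= l)%nat -> (c <= l)%nat ->
       sumR (fun h => M b h) (S c) <= sumR (fun h => MK M K b h) (S c)).
Proof. split; [|split].
  - intros b c _ _. unfold MK. destruct (Nat.leb_spec b (K + 1)); [|apply P0].
    destruct (Nat.ltb_spec c b); [apply P0|]. destruct (Nat.leb_spec c K); [apply P0|].
    destruct (Nat.eqb_spec c (K + 1)); [| lra]. assert (HP2 := P2 b ltac:(lia)). lra.
  - intros b Hb. destruct (Nat.leb_spec b (K + 1)).
    + apply sum_upto; lia.
    + rewrite (sumR_ext _ (fun c => M b c)) by (intros; apply MK_out; lia). apply P1; auto.
  - intros b c Hb Hc. destruct (Nat.leb_spec b (K + 1)).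
    2:{ rewrite (sumR_ext (fun h => MK M K b h) (fun h => M b h)) by (intros; apply MK_out; lia). lra. }
    destruct (Nat.ltb_spec c b).
    + rewrite (sumR_ext (fun h => MK M K b h) (fun h => M (h + 1)%nat h)) by (intros; apply MK_lt; lia).
      destruct (Nat.leb_spec (c + 2) b).
      * apply P3; auto.
      * replace (S c) with b by lia. apply Q; auto.
    + destruct (Nat.leb_spec c K).
      * replace (S c) with (b + (S c - b))%nat by lia. rewrite !sumR_split.
        rewrite (sumR_ext (fun h => MK M K b h) (fun h => M (h + 1)%nat h)) by (intros; apply MK_lt; lia).
        rewrite (sumR_ext (fun i => MK M K b (b + i)) (fun i => M b (b + i)%nat)) by (intros; apply MK_mid; lia).
        assert (H2 := Q b ltac:(lia)). lra.
      * rewrite sum_upto by lia. rewrite <- (P1 b Hb).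
        replace (S l) with (S c + (l - c))%nat by lia. rewrite sumR_split.
        assert (0 <= sumR (fun i => M b (S c + i)%nat) (l - c)) by (apply sumR_nonneg; intros; apply P0).
        lra.
Qed.
End C.

Lemma exp_bound x : 0 <= x <= 1/2 -> exp (- (2 * x)) <= 1 - x.
Proof. intros Hx. rewrite exp_Ropp.
  assert (H := exp_ineq1_le (2 * x)). assert (He := exp_pos (2 * x)).
  apply Rmult_le_reg_l with (exp (2 * x)); auto.
  rewrite Rinv_r by lra. nra. Qed.

Lemma pow_exp_bound x n a : 0 <= x <= 1/2 -> INR n * x <= 3 / 2 * a -> exp (- (3 * a)) <= (1 - x) ^ n.
Proof. intros Hx Hn. apply Rle_trans with (exp (- (2 * x)) ^ n).
  - rewrite exp_pow. destruct (Req_dec (INR n * - (2 * x)) (- (3 * a))) as [E|E].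
    + rewrite E; lra.
    + left. apply exp_increasing. lra.
  - apply pow_incr. split; [left; apply exp_pos| apply exp_bound; auto]. Qed.

Theorem mainTheorem3 (K kappa : nat) (a : R) :
  (2 <= kappa)%nat -> 0 < a ->
  exists (L0 : nat) (delta eps : R), 0 < delta /\ 0 < eps /\
  forall (l : nat) (q : R),
    (L0 <= l)%nat -> (K + 2 <= l)%nat ->
    0 < q -> q < 1 - 1 / INR kappa -> q < delta ->
    Rabs (INR l * q - a) < eps ->
    (* stochastic *)
    (forall b c : nat, (b <= l)%nat -> (c <= l)%nat -> 0 <= MHK K l kappa q b c) /\
    (forall b : nat, (b <= l)%nat -> sumR (fun c => MHK K l kappa q b c) (S l) = 1) /\
    (* stochastic domination of cumulative sums *)
    (forall b c : nat, (b <= l)%nat -> (c <= l)%nat ->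
       sumR (fun h => MH l kappa q b h) (S c) <= sumR (fun h => MHK K l kappa q b h) (S c)).
Proof.
  intros Hk Ha.
  set (al := Rmin 1 (a / 4)).
  set (E := exp (- (3 * a))).
  set (F := INR (fact (K + 1))).
  assert (HF : 1 <= F) by (unfold F; apply (le_INR 1); apply lt_O_fact).
  assert (Hal : 0 < al <= 1) by (unfold al; split; [apply Rmin_pos; lra| apply Rmin_l]).
  assert (HE : 0 < E) by apply exp_pos.
  assert (HK1 : 1 <= INR (K + 1)) by (rewrite plus_INR; simpl; assert (0 <= INR K) by apply pos_INR; lra).
  assert (H2K : 0 < 2 ^ (K + 1)) by (apply pow_lt; lra).
  assert (Halp : 0 < al ^ (K + 1)) by (apply pow_lt; lra).
  set (D1 := E / 2 ^ (K + 1)).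
  set (D2 := al ^ (K + 1) * E / (F * (INR (K + 1) * 2 ^ (K + 1)))).
  assert (HD1 : 0 < D1) by (unfold D1; apply Rdiv_lt_0_compat; lra).
  assert (HD2 : 0 < D2) by (unfold D2; apply Rdiv_lt_0_compat; [nra| apply Rmult_lt_0_compat; nra]).
  exists (2 * (K + 1))%nat, (Rmin (1/2) (Rmin D1 D2)), (a / 2).
  split; [apply Rmin_pos; [lra| apply Rmin_pos; auto]|]. split; [lra|].
  intros l q HL Hl Hq Hq1 Hqd Habs.
  assert (Hq12 : q < 1/2) by (apply Rlt_le_trans with (1 := Hqd); apply Rmin_l).
  assert (HqD1 : q < D1) by (apply Rlt_le_trans with (1 := Hqd);
    eapply Rle_trans; [apply Rmin_r| apply Rmin_l]).
  assert (HqD2 : q < D2) by (apply Rlt_le_trans with (1 := Hqd);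
    eapply Rle_trans; [apply Rmin_r| apply Rmin_r]).
  apply Rabs_def2 in Habs. destruct Habs as [Hlq1 Hlq2].
  assert (Hkap : 2 <= INR kappa) by (apply (le_INR 2); auto).
  assert (HXq : XX kappa q = q) by (unfold XX, pp; field; lra).
  set (Y := YY kappa q).
  assert (HY0 : 0 < Y) by (unfold Y, YY, pp; apply Rdiv_lt_0_compat; [apply Rdiv_lt_0_compat; nra| lra]).
  assert (HYq : Y <= q).
  { unfold Y, YY, pp. replace (INR kappa * q / (INR kappa - 1) / INR kappa) with (q / (INR kappa - 1)) by (field; lra).
    apply Rmult_le_reg_r with (INR kappa - 1); [lra|]. unfold Rdiv. rewrite Rmult_assoc, Rinv_l by lra. nra. }
  assert (HM : MH l kappa q = MM l q Y) by (rewrite MH_MM, HXq; reflexivity).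
  assert (HX : 0 <= q <= 1) by lra.
  assert (HY : 0 <= Y <= 1) by lra.
  assert (Hpow : E <= (1 - q) ^ l) by (apply pow_exp_bound; lra).
  assert (Hone : forall b c, 0 <= MM l q Y b c) by (intros; apply MM_nonneg; auto).
  apply (comb (MH l kappa q) K l Hl); rewrite HM.
  - exact Hone.
  - intros b Hb. apply row_sum; auto.
  -
    intros b Hb.
    assert (HB : sumR (fun i => MM l q Y b (b + i)%nat) (K + 1 - b) <= sumR (fun h => MM l q Y b h) (S K)).
    { replace (S K) with (b + (K + 1 - b))%nat by lia. rewrite sumR_split.
      assert (0 <= sumR (fun h => MM l q Y b h) b) by (apply sumR_nonneg; intros; auto). lra. }
    assert (HT := tail_low l q Y HX HY b K Hb ltac:(lia)).
    assert (HA : sumR (fun h => MM l q Y (h + 1)%nat h) b <= INR b * (2 ^ (K + 1) * Y)).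
    { apply sumR_le_const. intros h Hh.
      apply Rle_trans with (sumR (fun c => MM l q Y (h + 1)%nat c) (S h)).
      - simpl sumR. assert (0 <= sumR (fun c => MM l q Y (h + 1)%nat c) h) by (apply sumR_nonneg; intros; auto). lra.
      - eapply Rle_trans; [apply cumul_tail; auto; lia|].
        replace (h + 1 - h)%nat with 1%nat by lia. rewrite pow_1.
        apply Rmult_le_compat_r; [lra| apply Rle_pow; [lra| lia]]. }
    assert (HbK : INR b <= INR (K + 1)) by (apply le_INR; lia).
    set (m := (K + 1 - b)%nat). set (r := (l - K - 1)%nat).
    assert (Hlb : (l - b = r + m)%nat) by (unfold r, m; lia).
    assert (Hw : al ^ (K + 1) / F * E <= Aw (l - b) q m * Aw b Y 0).
    { unfold Aw. rewrite C_n0, pow_O, Nat.sub_0_r.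
      assert (H1 : (1 - q) ^ l <= (1 - q) ^ (l - b - m) * (1 - Y) ^ b).
      { apply Rle_trans with ((1 - q) ^ (l - b - m) * (1 - q) ^ b).
        - rewrite <- pow_add. apply pow_decr; [lra| lia].
        - apply Rmult_le_compat_l; [apply pow_le; lra| apply pow_incr; lra]. }
      assert (H2 : al ^ (K + 1) / F <= Binomial.C (l - b) m * q ^ m).
      { rewrite Hlb. eapply Rle_trans; [| apply Rmult_le_compat_r; [apply pow_le; lra| apply C_lower]].
        assert (Hr : al <= INR r * q).
        { unfold r. rewrite minus_INR by lia. rewrite minus_INR by lia.
          assert (INR (2 * (K + 1)) <= INR l) by (apply le_INR; auto).
          rewrite mult_INR in H. rewrite plus_INR in *. simpl in H.
          assert (al <= a / 4) by apply Rmin_r.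
          replace (INR 1) with 1 by reflexivity. nra. }
        assert (Hm : (m <= K + 1)%nat) by (unfold m; lia).
        assert (Hfm : 1 <= INR (fact m)) by (apply (le_INR 1); apply lt_O_fact).
        assert (HfmF : INR (fact m) <= F) by (apply le_INR, fact_le; auto).
        assert (Ha1 : al ^ (K + 1) <= al ^ m) by (apply pow_decr; [lra| auto]).
        assert (Ha2 : al ^ m <= (INR r * q) ^ m) by (apply pow_incr; lra).
        replace (INR r ^ m / INR (fact m) * q ^ m) with ((INR r * q) ^ m / INR (fact m)) by (rewrite Rpow_mult_distr; field; lra).
        apply Rle_trans with (al ^ m / INR (fact m)).
        - unfold Rdiv. apply Rmult_le_compat; try lra.
          + left; apply Rinv_0_lt_compat; lra.
          + apply Rinv_le_contravar; lra.
        - unfold Rdiv. apply Rmult_le_compat_r; [left; apply Rinv_0_lt_compat; lra| lra]. }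
      assert (0 <= al ^ (K + 1) / F) by (unfold Rdiv; apply Rmult_le_pos; [lra| left; apply Rinv_0_lt_compat; lra]).
      assert (0 <= (1 - q) ^ l) by (apply pow_le; lra).
      replace (Binomial.C (l - b) m * q ^ m * (1 - q) ^ (l - b - m) * (1 * 1 * (1 - Y) ^ b))
        with ((Binomial.C (l - b) m * q ^ m) * ((1 - q) ^ (l - b - m) * (1 - Y) ^ b)) by ring.
      apply Rmult_le_compat; lra. }
    assert (HYD : INR (K + 1) * (2 ^ (K + 1) * Y) <= al ^ (K + 1) / F * E).
    { assert (HD : Y * (F * (INR (K + 1) * 2 ^ (K + 1))) <= al ^ (K + 1) * E).
      { apply Rle_trans with (D2 * (F * (INR (K + 1) * 2 ^ (K + 1)))).
        - apply Rmult_le_compat_r; [| lra]. apply Rmult_le_pos; [lra| nra].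
        - unfold D2. right. field. split; lra. }
      apply Rmult_le_reg_l with F; [lra|].
      replace (F * (al ^ (K + 1) / F * E)) with (al ^ (K + 1) * E) by (field; lra).
      replace (F * (INR (K + 1) * (2 ^ (K + 1) * Y))) with (Y * (F * (INR (K + 1) * 2 ^ (K + 1)))) by ring. exact HD. }
    assert (0 <= 2 ^ (K + 1) * Y) by nra.
    assert (INR b * (2 ^ (K + 1) * Y) <= INR (K + 1) * (2 ^ (K + 1) * Y)) by (apply Rmult_le_compat_r; lra).
    unfold m in *. lra.
  -
    intros b c Hcb HbK.
    eapply Rle_trans; [apply cumul_tail; auto; lia|].
    apply Rle_trans with (2 ^ (K + 1) * Y ^ 2).
    { apply Rmult_le_compat; [apply pow_le; lra| apply pow_le; lra| apply Rle_pow; [lra| lia]| apply pow_decr; [lra| lia]]. }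
    apply Rle_trans with (Y * (1 - q) ^ l).
    { assert (H2Y : 2 ^ (K + 1) * Y <= E).
      { apply Rle_trans with (2 ^ (K + 1) * D1); [apply Rmult_le_compat_l; lra|].
        unfold D1. right. field. lra. }
      simpl pow. rewrite Rmult_1_r. nra. }
    eapply Rle_trans; [apply (M_low l q Y HX HY HYq c); lia|].
    apply (sumR_ge_term (fun h => MM l q Y (h + 1)%nat h) (S c) c); [intros; auto| lia].
Qed.
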